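(* Let $X$ be a real Hilbert space, let $A$ be a closed affine subspace of $X$ and $B$ a nonempty closed convex subset of $X$ (with $A\cap B$ possibly empty). Let $g := P_{\overline{B-A}}\,0$ and assume $g\in B-A$, so that $E:=A\cap(B-g)\neq\varnothing$. Let $T := \mathrm{Id}-P_A+P_BR_A$ and let $x\in X$. Then the sequence $(P_A T^n x)_{n\in\mathbb{N}}$ converges weakly to some point in $E$.
   Context: For a nonempty closed convex set $C\subseteq X$, $P_C$ denotes the metric projection onto $C$ and $R_C:=2P_C-\mathrm{Id}$ the reflector. $T=\tfrac12(\mathrm{Id}+R_BR_A)$ is the Douglas–Rachford operator for the ordered pair $(A,B)$. $\overline{B-A}$ is the closure of the Minkowski difference $B-A=\{b-a: a\in A,\ b\in B\}$, so $g$ is its element of minimal norm. *)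

(* Defs.v *)
From Stdlib Require Import Reals Lra.
From Stdlib Require Import ClassicalEpsilon.
Open Scope R_scope.

Record HilbertSpace : Type := {
  carrier :> Type;
  hzero : carrier;
  hadd : carrier -> carrier -> carrier;
  hopp : carrier -> carrier;
  hscal : R -> carrier -> carrier;
  hinner : carrier -> carrier -> R;
  hadd_assoc : forall x y z, hadd x (hadd y z) = hadd (hadd x y) z;
  hadd_comm : forall x y, hadd x y = hadd y x;
  hadd_0 : forall x, hadd x hzero = x;
  hadd_opp : forall x, hadd x (hopp x) = hzero;
  hscal_assoc : forall a b x, hscal a (hscal b x) = hscal (a * b) x;
  hscal_1 : forall x, hscal 1 x = x;
  hscal_distr_l : forall a x y, hscal a (hadd x y) = hadd (hscal a x) (hscal a y);
  hscal_distr_r : forall a b x, hscal (a + b) x = hadd (hscal a x) (hscal b x);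
  hinner_sym : forall x y, hinner x y = hinner y x;
  hinner_add_l : forall x y z, hinner (hadd x y) z = hinner x z + hinner y z;
  hinner_scal_l : forall a x y, hinner (hscal a x) y = a * hinner x y;
  hinner_pos : forall x, 0 <= hinner x x;
  hinner_def : forall x, hinner x x = 0 -> x = hzero;
  hcomplete : forall u : nat -> carrier,
    (forall eps, eps > 0 -> exists N, forall m n, (m >= N)%nat -> (n >= N)%nat ->
       sqrt (hinner (hadd (u m) (hopp (u n))) (hadd (u m) (hopp (u n)))) < eps) ->
    exists l, forall eps, eps > 0 -> exists N, forall n, (n >= N)%nat ->
       sqrt (hinner (hadd (u n) (hopp l)) (hadd (u n) (hopp l))) < eps
}.

Arguments hzero {h}.
Arguments hadd {h}.
Arguments hopp {h}.
Arguments hscal {h}.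
Arguments hinner {h}.

Section Hilbert.
Context {X : HilbertSpace}.

Definition hsub (x y : X) : X := hadd x (hopp y).
Definition hnorm (x : X) : R := sqrt (hinner x x).

Definition converges (u : nat -> X) (l : X) : Prop :=
  Un_cv (fun n => hnorm (hsub (u n) l)) 0.
Definition weakly_converges (u : nat -> X) (l : X) : Prop :=
  forall y : X, Un_cv (fun n => hinner (u n) y) (hinner l y).

Definition is_closed (C : X -> Prop) : Prop :=
  forall (u : nat -> X) (l : X), (forall n, C (u n)) -> converges u l -> C l.
Definition is_convex (C : X -> Prop) : Prop :=
  forall x y (t : R), C x -> C y -> 0 <= t <= 1 ->
    C (hadd (hscal t x) (hscal (1 - t) y)).
Definition is_affine (C : X -> Prop) : Prop :=
  forall x y (t : R), C x -> C y -> C (hadd (hscal t x) (hscal (1 - t) y)).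
Definition nonempty (C : X -> Prop) : Prop := exists x, C x.
Definition closure (C : X -> Prop) : X -> Prop :=
  fun l => exists u : nat -> X, (forall n, C (u n)) /\ converges u l.
Definition mdiff (B A : X -> Prop) : X -> Prop :=
  fun z => exists b a, B b /\ A a /\ z = hsub b a.

(* metric projection: the (unique, for nonempty closed convex C) nearest point *)
Definition is_proj (C : X -> Prop) (x p : X) : Prop :=
  C p /\ forall c, C c -> hnorm (hsub x p) <= hnorm (hsub x c).
Definition proj (C : X -> Prop) (x : X) : X :=
  epsilon (inhabits x) (fun p => is_proj C x p).
Definition refl (C : X -> Prop) (x : X) : X :=
  hsub (hscal 2 (proj C x)) x.

Definition DR_op (A B : X -> Prop) (x : X) : X :=
  hadd (hsub x (proj A x)) (proj B (refl A x)).

End Hilbert.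

(* Main.v *)
Require Import Defs.
From Stdlib Require Import Reals Lra SeqProp ClassicalEpsilon Classical Lia.
Open Scope R_scope.

Arguments hadd_assoc {h}. Arguments hadd_comm {h}. Arguments hadd_0 {h}. Arguments hadd_opp {h}.
Arguments hscal_assoc {h}. Arguments hscal_1 {h}. Arguments hscal_distr_l {h}. Arguments hscal_distr_r {h}.
Arguments hinner_sym {h}. Arguments hinner_add_l {h}. Arguments hinner_scal_l {h}. Arguments hinner_pos {h}. Arguments hinner_def {h}.

Section H.
Context {X : HilbertSpace}.

Definition nsq (u : X) : R := hinner u u.

Lemma hadd_0_l (x : X) : hadd hzero x = x.
Proof. rewrite hadd_comm; apply hadd_0. Qed.

Lemma hadd_cancel_l (a b c : X) : hadd a b = hadd a c -> b = c.
Proof.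
  intro H.
  assert (E : hadd (hopp a) (hadd a b) = hadd (hopp a) (hadd a c)) by now rewrite H.
  rewrite !hadd_assoc in E. rewrite (hadd_comm (hopp a) a), hadd_opp, !hadd_0_l in E.
  exact E.
Qed.

Lemma hscal_0_l (x : X) : hscal 0 x = hzero.
Proof.
  symmetry. apply (hadd_cancel_l (hscal 0 x)).
  rewrite hadd_0, <- hscal_distr_r. f_equal. ring.
Qed.

Lemma hopp_scal (x : X) : hopp x = hscal (-1) x.
Proof.
  apply (hadd_cancel_l x). rewrite hadd_opp.
  rewrite <- (hscal_1 x) at 1. rewrite <- hscal_distr_r.
  replace (1 + -1) with 0 by ring. now rewrite hscal_0_l.
Qed.

Lemma hinner_add_r (x y z : X) : hinner x (hadd y z) = hinner x y + hinner x z.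
Proof. rewrite !(hinner_sym x). apply hinner_add_l. Qed.

Lemma hinner_scal_r a (x y : X) : hinner x (hscal a y) = a * hinner x y.
Proof. rewrite !(hinner_sym x). apply hinner_scal_l. Qed.

Lemma hinner_0_l (y : X) : hinner hzero y = 0.
Proof. rewrite <- (hscal_0_l hzero), hinner_scal_l. ring. Qed.

Lemma hinner_0_r (y : X) : hinner y hzero = 0.
Proof. rewrite hinner_sym; apply hinner_0_l. Qed.

Lemma hinner_opp_l (x y : X) : hinner (hopp x) y = - hinner x y.
Proof. rewrite hopp_scal, hinner_scal_l. ring. Qed.

Lemma hinner_opp_r (x y : X) : hinner y (hopp x) = - hinner y x.
Proof. rewrite hopp_scal, hinner_scal_r. ring. Qed.

Lemma sub_eq0 (u v : X) : hsub u v = hzero -> u = v.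
Proof.
  unfold hsub; intro H.
  rewrite <- (hadd_0 u), <- (hadd_opp v), (hadd_comm v), hadd_assoc, H.
  apply hadd_0_l.
Qed.

Lemma ext_inner (u v : X) : (forall y, hinner u y = hinner v y) -> u = v.
Proof.
  intro H. apply sub_eq0. apply hinner_def.
  unfold hsub at 1. rewrite hinner_add_l, hinner_opp_l, !H. ring.
Qed.

Lemma nsq_nonneg (u : X) : 0 <= nsq u.
Proof. apply hinner_pos. Qed.

Lemma nsq_eq0 (u : X) : nsq u = 0 -> u = hzero.
Proof. apply hinner_def. Qed.

End H.

Ltac lexp := repeat rewrite ?hinner_add_l, ?hinner_scal_l, ?hinner_opp_l, ?hinner_0_l.
Ltac rexp := repeat rewrite ?hinner_add_r, ?hinner_scal_r, ?hinner_opp_r, ?hinner_0_r.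
Ltac veq := apply ext_inner; let y := fresh "y" in intro y;
  unfold hsub, nsq, refl, DR_op in *; lexp; first [ring | field].
Ltac iexp := unfold hsub, nsq in *; lexp; rexp.
Ltac iexpH H := unfold hsub, nsq in H; repeat rewrite ?hinner_add_l, ?hinner_scal_l, ?hinner_opp_l, ?hinner_0_l, ?hinner_add_r, ?hinner_scal_r, ?hinner_opp_r, ?hinner_0_r in H.

Section H2.
Context {X : HilbertSpace}.

Lemma test (a b : X) (t : R) : hsub (hadd (hscal t a) (hscal (1-t) b)) b = hscal t (hsub a b).
Proof. veq. Qed.

Lemma nsq_sub_sym (a b : X) : nsq (hsub a b) = nsq (hsub b a).
Proof. iexp. rewrite (hinner_sym a b). ring. Qed.

End H2.


Lemma inv_small (eps : R) : eps > 0 -> exists N, forall n, (n >= N)%nat -> / (INR n + 1) < eps.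
Proof.
  intro He. destruct (archimed_cor1 eps He) as [N [HN HN0]]. exists N. intros n Hn.
  apply Rle_lt_trans with (/ INR N); [|exact HN].
  apply Rinv_le_contravar. apply lt_0_INR; lia.
  apply le_INR in Hn. lra.
Qed.

Lemma Rle_eps (Q a K : R) : (forall t, 0 < t <= 1 -> Q <= a + t * K) -> Q <= a.
Proof.
  intro H. destruct (Rle_lt_dec Q a) as [h|h]; [exact h|].
  destruct (Rle_lt_dec K 0) as [hk|hk].
  - specialize (H 1). nra.
  - set (t := Rmin 1 ((Q - a) / (2 * K))).
    assert (ht1 : t <= 1) by apply Rmin_l.
    assert (ht2 : t <= (Q - a) / (2 * K)) by apply Rmin_r.
    assert (ht0 : 0 < t).
    { unfold t, Rmin. destruct (Rle_dec 1 ((Q - a) / (2 * K))); [lra|].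
      apply Rdiv_lt_0_compat; lra. }
    specialize (H t (conj ht0 ht1)).
    assert (t * K <= (Q - a) / 2).
    { apply Rle_trans with ((Q - a) / (2 * K) * K). apply Rmult_le_compat_r; lra.
      right. field. lra. }
    lra.
Qed.

Section H3.
Context {X : HilbertSpace}.

Lemma sqrt_lt_iff (q e : R) : 0 <= q -> 0 < e -> (sqrt q < e <-> q < e * e).
Proof.
  intros hq he. split; intro h.
  - apply sqrt_lt_0_alt. rewrite sqrt_square by lra. exact h.
  - rewrite <- (sqrt_square e) by lra. apply sqrt_lt_1; nra.
Qed.

Lemma conv_sq (u : nat -> X) l : converges u l <->
  forall eps, eps > 0 -> exists N, forall n, (n >= N)%nat -> nsq (hsub (u n) l) < eps.
Proof.
  unfold converges, Un_cv, hnorm, Rdist. split.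
  - intros H eps he. destruct (H (sqrt eps) (sqrt_lt_R0 _ he)) as [N HN].
    exists N. intros n hn. specialize (HN n hn).
    rewrite Rminus_0_r, Rabs_pos_eq in HN by apply sqrt_pos.
    apply sqrt_lt_0_alt. exact HN.
  - intros H eps he. destruct (H (eps * eps)) as [N HN]. nra.
    exists N. intros n hn. specialize (HN n hn).
    rewrite Rminus_0_r, Rabs_pos_eq by apply sqrt_pos.
    apply sqrt_lt_iff. apply hinner_pos. lra. exact HN.
Qed.

Lemma complete_sq (u : nat -> X) :
  (forall eps, eps > 0 -> exists N, forall m n, (m >= N)%nat -> (n >= N)%nat -> nsq (hsub (u m) (u n)) < eps) ->
  exists l, forall eps, eps > 0 -> exists N, forall n, (n >= N)%nat -> nsq (hsub (u n) l) < eps.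
Proof.
  intro H. destruct (hcomplete X u) as [l Hl].
  - intros eps he. destruct (H (eps * eps)) as [N HN]. nra. exists N. intros m n hm hn.
    apply sqrt_lt_iff. apply hinner_pos. lra. apply HN; auto.
  - exists l. intros eps he. destruct (Hl (sqrt eps) (sqrt_lt_R0 _ he)) as [N HN].
    exists N. intros n hn. specialize (HN n hn). apply sqrt_lt_0_alt. exact HN.
Qed.

Lemma young (p q : X) (eta : R) : eta > 0 ->
  nsq (hadd p q) <= (1 + eta) * nsq p + (1 + / eta) * nsq q.
Proof.
  intro he.
  assert (H0 := hinner_pos (hsub (hscal eta p) q)).
  iexpH H0. iexp. rewrite (hinner_sym q p) in *.
  set (P := hinner p p) in *. set (Q := hinner q q) in *. set (I := hinner p q) in *.
  assert (2 * I <= eta * P + / eta * Q).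
  { apply (Rmult_le_reg_l eta); auto.
    replace (eta * (eta * P + / eta * Q)) with (eta * eta * P + Q) by (field; lra). nra. }
  nra.
Qed.

Definition mid (w1 w2 : X) : X := hadd (hscal (1/2) w1) (hscal (1 - 1/2) w2).

Lemma mid_identity (a w1 w2 : X) :
  nsq (hsub a (mid w1 w2)) = /2 * nsq (hsub a w1) + /2 * nsq (hsub a w2) - /4 * nsq (hsub w1 w2).
Proof.
  unfold mid. iexp. rewrite (hinner_sym w1 a), (hinner_sym w2 a), (hinner_sym w2 w1). field.
Qed.

Lemma young_lim (v : nat -> X) (k : X) :
  (forall eps, eps > 0 -> exists N, forall n, (n >= N)%nat -> nsq (hsub (v n) k) < eps) ->
  forall x t, 0 < t <= 1 -> exists N, forall n, (n >= N)%nat ->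
   nsq (hsub x k) <= (1 + t) * nsq (hsub x (v n)) + t /\
   nsq (hsub x (v n)) <= (1 + t) * nsq (hsub x k) + t.
Proof.
  intros Hv x t ht. destruct (Hv (t / (1 + / t))) as [N HN].
  { apply Rdiv_lt_0_compat. lra. assert (0 < / t) by (apply Rinv_0_lt_compat; lra). lra. }
  exists N. intros n hn. specialize (HN n hn).
  assert (hit : 0 < / t) by (apply Rinv_0_lt_compat; lra).
  assert (Hb : (1 + / t) * nsq (hsub (v n) k) <= t).
  { apply Rle_trans with ((1 + / t) * (t / (1 + / t))).
    apply Rmult_le_compat_l; lra. right; field; lra. }
  split.
  - replace (hsub x k) with (hadd (hsub x (v n)) (hsub (v n) k)) by veq.
    eapply Rle_trans. apply young with (eta := t); lra. lra.
  - replace (hsub x (v n)) with (hadd (hsub x k) (hsub k (v n))) by veq.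
    eapply Rle_trans. apply young with (eta := t); lra.
    rewrite (nsq_sub_sym k (v n)). lra.
Qed.

Lemma lim_le (v : nat -> X) (k x : X) (a : R) :
  (forall eps, eps > 0 -> exists N, forall n, (n >= N)%nat -> nsq (hsub (v n) k) < eps) ->
  (forall eps, eps > 0 -> exists N, forall n, (n >= N)%nat -> nsq (hsub x (v n)) <= a + eps) ->
  0 <= a -> nsq (hsub x k) <= a.
Proof.
  intros Hv Ha a0. apply (Rle_eps _ _ (a + 3)). intros t ht.
  destruct (young_lim v k Hv x t ht) as [N1 H1].
  destruct (Ha t) as [N2 H2]. lra.
  destruct (H1 (max N1 N2)) as [H _]. lia. specialize (H2 (max N1 N2) ltac:(lia)).
  assert ((1 + t) * nsq (hsub x (v (max N1 N2))) <= (1 + t) * (a + t)) by (apply Rmult_le_compat_l; lra).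
  nra.
Qed.

Lemma lim_ge (v : nat -> X) (k x : X) (a : R) :
  (forall eps, eps > 0 -> exists N, forall n, (n >= N)%nat -> nsq (hsub (v n) k) < eps) ->
  (forall n, a <= nsq (hsub x (v n))) -> a <= nsq (hsub x k).
Proof.
  intros Hv Ha. apply (Rle_eps _ _ (nsq (hsub x k) + 1)). intros t ht.
  destruct (young_lim v k Hv x t ht) as [N1 H1].
  destruct (H1 N1) as [_ H]. lia. specialize (Ha N1).
  assert (0 <= nsq (hsub x k)) by apply nsq_nonneg. nra.
Qed.

End H3.


Section H4.
Context {X : HilbertSpace}.

Lemma nsq0_eq (a b : X) : nsq (hsub a b) <= 0 -> a = b.
Proof.
  intro h. apply sub_eq0, nsq_eq0. pose proof (nsq_nonneg (hsub a b)). lra.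
Qed.

Lemma closure_incl (C : X -> Prop) c : C c -> closure C c.
Proof.
  intro h. exists (fun _ => c). split; auto. apply conv_sq. intros eps he. exists O. intros n _.
  replace (hsub c c) with (@hzero X) by veq. unfold nsq. rewrite hinner_0_l. lra.
Qed.

Lemma norm_le_nsq (u v : X) : hnorm u <= hnorm v -> nsq u <= nsq v.
Proof. intro h. apply sqrt_le_0; try apply hinner_pos. exact h. Qed.

Lemma nsq_le_norm (u v : X) : nsq u <= nsq v -> hnorm u <= hnorm v.
Proof. intro h. apply sqrt_le_1; try apply hinner_pos. exact h. Qed.

Lemma proj_exists_gen (C : X -> Prop) (x : X) : is_convex C -> nonempty C ->
  exists l, closure C l /\ forall k, closure C k -> nsq (hsub x l) <= nsq (hsub x k).
Proof.
  intros hc [c0 hc0].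
  set (S := fun r => exists c, C c /\ r = - nsq (hsub x c)).
  destruct (completeness S) as [m [Hm1 Hm2]].
  { exists 0. intros r [c [_ ->]]. pose proof (nsq_nonneg (hsub x c)). lra. }
  { exists (- nsq (hsub x c0)). exists c0. auto. }
  set (d := - m).
  assert (hd1 : forall c, C c -> d <= nsq (hsub x c)).
  { intros c h. assert (- nsq (hsub x c) <= m) by (apply Hm1; exists c; auto). unfold d; lra. }
  assert (hd2 : forall e, e > 0 -> exists c, C c /\ nsq (hsub x c) < d + e).
  { intros e he. apply NNPP. intro hn.
    assert (m <= m - e). apply Hm2. intros r [c [h1 ->]].
    destruct (Rle_lt_dec (d + e) (nsq (hsub x c))) as [h|h]. unfold d in h; lra.
    exfalso. apply hn. exists c; auto. lra. }
  assert (hd0 : 0 <= d).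
  { assert (m <= 0) by (apply Hm2; intros r [c [_ ->]]; pose proof (nsq_nonneg (hsub x c)); lra).
    unfold d; lra. }
  set (cs := fun n : nat => epsilon (inhabits x) (fun c => C c /\ nsq (hsub x c) < d + / (INR n + 1))).
  assert (hcs : forall n, C (cs n) /\ nsq (hsub x (cs n)) < d + / (INR n + 1)).
  { intro n. unfold cs. apply epsilon_spec. apply hd2. apply Rlt_gt, RinvN_pos. }
  assert (hcauchy : forall n m, nsq (hsub (cs n) (cs m)) <= 2 * / (INR n + 1) + 2 * / (INR m + 1)).
  { intros n m0. destruct (hcs n) as [h1 h2]. destruct (hcs m0) as [h3 h4].
    pose proof (mid_identity x (cs n) (cs m0)) as hm.
    assert (d <= nsq (hsub x (mid (cs n) (cs m0)))). { apply hd1. apply hc; auto. lra. }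
    lra. }
  destruct (complete_sq cs) as [l hl].
  { intros eps he. destruct (inv_small (eps / 4)) as [N HN]. lra. exists N. intros m0 n hm hn.
    pose proof (HN m0 hm). pose proof (HN n hn). specialize (hcauchy m0 n). lra. }
  exists l. split.
  - exists cs. split. intro n; apply hcs. apply (proj2 (conv_sq _ _)). exact hl.
  - intros k [v [hv hvk]]. pose proof (proj1 (conv_sq v k) hvk) as hvk2. clear hvk. rename hvk2 into hvk.
    apply Rle_trans with d.
    + apply (lim_le cs l x d hl); auto. intros e he. destruct (inv_small e he) as [N HN].
      exists N. intros n hn. specialize (HN n hn). destruct (hcs n). lra.
    + apply (lim_ge v k x d hvk). intro n. apply hd1. apply hv.
Qed.

Lemma proj_is (C : X -> Prop) (x : X) : is_convex C -> nonempty C -> is_closed C ->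
  is_proj C x (proj C x).
Proof.
  intros h1 h2 h3. unfold proj. apply epsilon_spec.
  destruct (proj_exists_gen C x h1 h2) as [l [[u [hu hul]] hmin]].
  exists l. split. eapply h3; eauto. intros c hc. apply nsq_le_norm. apply hmin.
  apply closure_incl; auto.
Qed.

Lemma proj_closure (C : X -> Prop) (x : X) : is_convex C -> nonempty C ->
  is_proj (closure C) x (proj (closure C) x).
Proof.
  intros h1 h2. unfold proj. apply epsilon_spec.
  destruct (proj_exists_gen C x h1 h2) as [l [hl hmin]].
  exists l. split; auto. intros c hc. apply nsq_le_norm. apply hmin. auto.
Qed.

Lemma nsq_sub_scal (u w : X) t : nsq (hsub u (hscal t w)) = nsq u - 2 * t * hinner u w + t * t * nsq w.
Proof. iexp. rewrite (hinner_sym w u). ring. Qed.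

Lemma var_ineq (C : X -> Prop) x p : is_convex C -> C p ->
  (forall c, C c -> nsq (hsub x p) <= nsq (hsub x c)) ->
  forall c, C c -> hinner (hsub x p) (hsub c p) <= 0.
Proof.
  intros hc hp hmin c hcc.
  apply (Rle_eps _ 0 (nsq (hsub c p) / 2)). intros t ht.
  assert (hct : C (hadd (hscal t c) (hscal (1 - t) p))) by (apply hc; auto; lra).
  specialize (hmin _ hct).
  replace (hsub x (hadd (hscal t c) (hscal (1 - t) p))) with (hsub (hsub x p) (hscal t (hsub c p))) in hmin by veq.
  rewrite nsq_sub_scal in hmin.
  set (I := hinner (hsub x p) (hsub c p)) in *. set (W := nsq (hsub c p)) in *.
  assert (t * (2 * I) <= t * (t * W)) by lra.
  apply Rmult_le_reg_l in H; lra.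
Qed.

Lemma proj_char (C : X -> Prop) x : is_convex C -> nonempty C -> is_closed C ->
  C (proj C x) /\ forall c, C c -> hinner (hsub x (proj C x)) (hsub c (proj C x)) <= 0.
Proof.
  intros h1 h2 h3. destruct (proj_is C x h1 h2 h3) as [hp hm]. split; auto.
  apply var_ineq; auto. intros c hc. apply norm_le_nsq. auto.
Qed.

Lemma proj_uniq (C : X -> Prop) x p : is_convex C -> nonempty C -> is_closed C ->
  C p -> (forall c, C c -> hinner (hsub x p) (hsub c p) <= 0) -> proj C x = p.
Proof.
  intros h1 h2 h3 hp hv. destruct (proj_char C x h1 h2 h3) as [hq hq2].
  set (q := proj C x) in *. specialize (hq2 p hp). specialize (hv q hq).
  apply nsq0_eq. iexp. iexpH hq2. iexpH hv.
  try rewrite (hinner_sym p x) in *; try rewrite (hinner_sym q x) in *; try rewrite (hinner_sym q p) in *. lra.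
Qed.

End H4.


Section DR.
Context {X : HilbertSpace} (A B : X -> Prop)
  (hA_ne : nonempty A) (hA_aff : is_affine A) (hA_cl : is_closed A)
  (hB_ne : nonempty B) (hB_conv : is_convex B) (hB_cl : is_closed B)
  (hg : mdiff B A (proj (closure (mdiff B A)) hzero)).

Definition gv := proj (closure (mdiff B A)) hzero.

Lemma A_conv : is_convex A.
Proof. intros x y t hx hy _. apply hA_aff; auto. Qed.

Lemma mdiff_conv : is_convex (mdiff B A).
Proof.
  intros z1 z2 t [b1 [a1 [hb1 [ha1 ->]]]] [b2 [a2 [hb2 [ha2 ->]]]] ht.
  exists (hadd (hscal t b1) (hscal (1 - t) b2)), (hadd (hscal t a1) (hscal (1 - t) a2)).
  split. apply hB_conv; auto. split. apply A_conv; auto. veq.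
Qed.

Lemma g_var : forall c, mdiff B A c -> 0 <= hinner gv (hsub c gv).
Proof.
  intros c hc.
  assert (hne : nonempty (mdiff B A)) by (exists gv; exact hg).
  destruct (proj_closure (mdiff B A) hzero mdiff_conv hne) as [_ hmin].
  pose proof (var_ineq (mdiff B A) hzero gv mdiff_conv hg) as hv.
  assert (H : hinner (hsub hzero gv) (hsub c gv) <= 0).
  { apply hv; auto. intros c' hc'. apply norm_le_nsq. apply hmin. apply closure_incl; auto. }
  unfold hsub at 1 in H. rewrite hinner_add_l, hinner_0_l, hinner_opp_l in H. fold gv in H. lra.
Qed.

Lemma A_line a0 a1 a2 t : A a0 -> A a1 -> A a2 -> A (hadd a0 (hscal t (hsub a1 a2))).
Proof.
  intros h0 h1 h2.
  set (m1 := hadd (hscal t a1) (hscal (1 - t) a2)).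
  set (m := hadd (hscal (1/2) a0) (hscal (1 - 1/2) m1)).
  assert (hm1 : A m1) by (apply hA_aff; auto).
  assert (hm : A m) by (apply hA_aff; auto).
  replace (hadd a0 (hscal t (hsub a1 a2))) with (hadd (hscal 2 m) (hscal (1 - 2) a2)).
  apply hA_aff; auto. unfold m, m1. veq.
Qed.

Lemma g_perp a1 a2 : A a1 -> A a2 -> hinner gv (hsub a1 a2) = 0.
Proof.
  intros h1 h2. destruct hg as [b0 [a0 [hb0 [ha0 Hg]]]]. fold gv in Hg.
  assert (key : forall t, 0 <= - t * hinner gv (hsub a1 a2)).
  { intro t. pose proof (g_var (hsub b0 (hadd a0 (hscal t (hsub a1 a2))))) as H.
    replace (hsub (hsub b0 (hadd a0 (hscal t (hsub a1 a2)))) gv) with (hscal (- t) (hsub a1 a2)) in H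
      by (rewrite Hg; veq).
    rewrite hinner_scal_r in H. apply H. exists b0, (hadd a0 (hscal t (hsub a1 a2))).
    split; auto. split; auto. apply A_line; auto. }
  pose proof (key 1). pose proof (key (-1)). lra.
Qed.

Lemma PA_char u : A (proj A u) /\ forall a, A a -> hinner (hsub u (proj A u)) (hsub a (proj A u)) = 0.
Proof.
  destruct (proj_char A u A_conv hA_ne hA_cl) as [hp hv]. split; auto.
  intros a ha. apply Rle_antisym. apply hv; auto.
  set (p := proj A u) in *.
  assert (ha' : A (hadd (hscal 2 p) (hscal (1 - 2) a))) by (apply hA_aff; auto).
  specialize (hv _ ha').
  replace (hsub (hadd (hscal 2 p) (hscal (1 - 2) a)) p) with (hscal (-1) (hsub a p)) in hv by veq.
  rewrite hinner_scal_r in hv. lra.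
Qed.

Lemma PA_shift e s : A e -> proj A (hadd e (hscal s gv)) = e.
Proof.
  intro he. apply proj_uniq; auto using A_conv. intros c hc.
  replace (hsub (hadd e (hscal s gv)) e) with (hscal s gv) by veq.
  rewrite hinner_scal_l, g_perp; auto. lra.
Qed.

Lemma PB_char u : B (proj B u) /\ forall c, B c -> hinner (hsub u (proj B u)) (hsub c (proj B u)) <= 0.
Proof. apply proj_char; auto. Qed.

Lemma PB_shift e s : A e -> B (hadd e gv) -> 0 <= s + 1 -> proj B (hsub e (hscal s gv)) = hadd e gv.
Proof.
  intros he heg hs. apply proj_uniq; auto. intros c hc.
  replace (hsub (hsub e (hscal s gv)) (hadd e gv)) with (hscal (- (s + 1)) gv) by veq.
  rewrite hinner_scal_l.
  assert (0 <= hinner gv (hsub (hsub c e) gv)).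
  { apply g_var. exists c, e. auto. }
  replace (hsub c (hadd e gv)) with (hsub (hsub c e) gv) by veq. nra.
Qed.

Definition T := DR_op A B.

Lemma T_z e s : A e -> B (hadd e gv) -> -1 <= s ->
  T (hadd e (hscal s gv)) = hadd e (hscal (s + 1) gv).
Proof.
  intros he heg hs. unfold T, DR_op, refl. rewrite PA_shift by auto.
  replace (hsub (hscal 2 e) (hadd e (hscal s gv))) with (hsub e (hscal s gv)) by veq.
  rewrite PB_shift by (auto; lra). veq.
Qed.

Lemma T_fne x y : nsq (hsub (T x) (T y)) + nsq (hsub (hsub x (T x)) (hsub y (T y))) <= nsq (hsub x y).
Proof.
  unfold T, DR_op, refl.
  destruct (PA_char x) as [hp hpx]. destruct (PA_char y) as [hp' hpy].
  set (p := proj A x) in *. set (p' := proj A y) in *.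
  specialize (hpx p' hp'). specialize (hpy p hp).
  destruct (PB_char (hsub (hscal 2 p) x)) as [hq hqx].
  destruct (PB_char (hsub (hscal 2 p') y)) as [hq' hqy].
  set (q := proj B (hsub (hscal 2 p) x)) in *. set (q' := proj B (hsub (hscal 2 p') y)) in *.
  specialize (hqx q' hq'). specialize (hqy q hq).
  iexp. iexpH hpx. iexpH hpy. iexpH hqx. iexpH hqy.
  try rewrite (hinner_sym y x) in *; try rewrite (hinner_sym p x) in *; try rewrite (hinner_sym p' x) in *;
  try rewrite (hinner_sym q x) in *; try rewrite (hinner_sym q' x) in *;
  try rewrite (hinner_sym p y) in *; try rewrite (hinner_sym p' y) in *;
  try rewrite (hinner_sym q y) in *; try rewrite (hinner_sym q' y) in *;
  try rewrite (hinner_sym p' p) in *; try rewrite (hinner_sym q p) in *; try rewrite (hinner_sym q' p) in *;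
  try rewrite (hinner_sym q p') in *; try rewrite (hinner_sym q' p') in *;
  try rewrite (hinner_sym q' q) in *.
  lra.
Qed.

End DR.


Section Center.
Context {X : HilbertSpace}.

Definition rle (u : nat -> X) (S : nat -> Prop) (w : X) (s : R) : Prop :=
  forall eps, eps > 0 -> exists N, forall n, (n >= N)%nat -> S n -> nsq (hsub (u n) w) <= s + eps.

Definition infinite (S : nat -> Prop) := forall N, exists n, (n >= N)%nat /\ S n.

Lemma rle_mono u S w s s' : rle u S w s -> s <= s' -> rle u S w s'.
Proof. intros h hs eps he. destruct (h eps he) as [N HN]. exists N. intros n h1 h2. specialize (HN n h1 h2). lra. Qed.

Lemma rle_nonneg u S w s : infinite S -> rle u S w s -> 0 <= s.
Proof.
  intros hi h. apply (Rle_eps 0 s 1). intros t ht. destruct (h t) as [N HN]. lra.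
  destruct (hi N) as [n [h1 h2]]. specialize (HN n h1 h2). pose proof (nsq_nonneg (hsub (u n) w)). lra.
Qed.

Lemma rle_lim u S w s : (forall e, e > 0 -> rle u S w (s + e)) -> rle u S w s.
Proof.
  intros h eps he. destruct (h (eps/2) ltac:(lra) (eps/2) ltac:(lra)) as [N HN]. exists N.
  intros n h1 h2. specialize (HN n h1 h2). lra.
Qed.

Lemma rle_mid u S w1 w2 s1 s2 : rle u S w1 s1 -> rle u S w2 s2 ->
  rle u S (mid w1 w2) (/2 * s1 + /2 * s2 - /4 * nsq (hsub w1 w2)).
Proof.
  intros h1 h2 eps he. destruct (h1 eps he) as [N1 H1]. destruct (h2 eps he) as [N2 H2].
  exists (max N1 N2). intros n hn hs. rewrite mid_identity.
  specialize (H1 n ltac:(lia) hs). specialize (H2 n ltac:(lia) hs). lra.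
Qed.

Lemma rle_shift u S w w' s (D : R) (Dn : nat -> R) : rle u S w s ->
  (forall e, e > 0 -> exists N, forall n, (n >= N)%nat -> Rabs (Dn n - D) <= e) ->
  (forall n, nsq (hsub (u n) w') = nsq (hsub (u n) w) + Dn n) -> rle u S w' (s + D).
Proof.
  intros h hD he eps hep. destruct (h (eps/2) ltac:(lra)) as [N1 H1]. destruct (hD (eps/2) ltac:(lra)) as [N2 H2].
  exists (max N1 N2). intros n hn hs. rewrite he.
  specialize (H1 n ltac:(lia) hs). specialize (H2 n ltac:(lia)).
  unfold Rabs in H2; destruct (Rcase_abs (Dn n - D)); lra.
Qed.

Lemma rle_young u v S c w s (dl : nat -> R) : infinite S -> rle u S c s ->
  (forall n, 0 <= dl n) -> (forall e, e > 0 -> exists N, forall n, (n >= N)%nat -> dl n <= e) ->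
  (forall n eta, eta > 0 -> S n -> nsq (hsub (v n) w) <= (1 + eta) * nsq (hsub (u n) c) + (1 + / eta) * dl n) ->
  rle v S w s.
Proof.
  intros hi h hd0 hd hy eps he.
  assert (hs : 0 <= s) by (eapply rle_nonneg; eauto).
  set (eta := eps / (2 * (s + 1))).
  assert (heta : eta > 0) by (unfold eta; apply Rdiv_lt_0_compat; lra).
  assert (hie : / eta > 0) by (apply Rinv_0_lt_compat; lra).
  destruct (h (eps / (4 * (1 + eta)))) as [N1 H1]. apply Rdiv_lt_0_compat; lra.
  destruct (hd (eps / (4 * (1 + / eta)))) as [N2 H2]. apply Rdiv_lt_0_compat; lra.
  exists (max N1 N2). intros n hn hS. specialize (H1 n ltac:(lia) hS). specialize (H2 n ltac:(lia)).
  specialize (hy n eta heta hS).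
  assert (a1 : (1 + eta) * nsq (hsub (u n) c) <= (1 + eta) * (s + eps / (4 * (1 + eta)))) by (apply Rmult_le_compat_l; lra).
  assert (a2 : (1 + / eta) * dl n <= (1 + / eta) * (eps / (4 * (1 + / eta)))) by (apply Rmult_le_compat_l; lra).
  assert (a3 : (1 + eta) * (s + eps / (4 * (1 + eta))) = s + eta * s + eps / 4) by (field; lra).
  assert (a4 : (1 + / eta) * (eps / (4 * (1 + / eta))) = eps / 4) by (field; lra).
  assert (a5 : eta * s <= eps / 2).
  { assert (eta * (s + 1) = eps / 2) by (unfold eta; field; lra). nra. }
  lra.
Qed.

Lemma rle_young2 u S w c s eta : eta > 0 -> rle u S w s ->
  rle u S c ((1 + eta) * s + (1 + / eta) * nsq (hsub w c)).
Proof.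
  intros he h eps hep. destruct (h (eps / (1 + eta))) as [N HN]. apply Rdiv_lt_0_compat; lra.
  exists N. intros n hn hs. specialize (HN n hn hs).
  replace (hsub (u n) c) with (hadd (hsub (u n) w) (hsub w c)) by veq.
  eapply Rle_trans. apply young with (eta := eta); auto.
  assert ((1 + eta) * nsq (hsub (u n) w) <= (1 + eta) * (s + eps / (1 + eta))) by (apply Rmult_le_compat_l; lra).
  replace ((1 + eta) * (s + eps / (1 + eta))) with ((1 + eta) * s + eps) in H by (field; lra).
  lra.
Qed.

Lemma center_exists u S : infinite S -> (exists w s, rle u S w s) ->
  exists c rho, rle u S c rho /\ forall w s, rle u S w s -> rho <= s.
Proof.
  intros hi [w0 [s0 h0]].
  set (Rs := fun r => exists w s, rle u S w s /\ r = - s).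
  destruct (completeness Rs) as [m [Hm1 Hm2]].
  { exists 0. intros r [w [s [h ->]]]. pose proof (rle_nonneg u S w s hi h). lra. }
  { exists (- s0). exists w0, s0. auto. }
  set (rho := - m).
  assert (hmin : forall w s, rle u S w s -> rho <= s).
  { intros w s h. assert (- s <= m) by (apply Hm1; exists w, s; auto). unfold rho; lra. }
  assert (hrho0 : 0 <= rho).
  { assert (m <= 0). apply Hm2. intros r [w [s [h ->]]]. pose proof (rle_nonneg u S w s hi h). lra.
    unfold rho; lra. }
  assert (happ : forall e, e > 0 -> exists w, rle u S w (rho + e)).
  { intros e he. apply NNPP. intro hn.
    assert (m <= m - e). apply Hm2. intros r [w [s [h ->]]].
    destruct (Rle_lt_dec (rho + e) s) as [h'|h']. unfold rho in h'; lra.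
    exfalso. apply hn. exists w. eapply rle_mono; eauto. lra. lra. }
  set (ws := fun k : nat => epsilon (inhabits w0) (fun w => rle u S w (rho + / (INR k + 1)))).
  assert (hws : forall k, rle u S (ws k) (rho + / (INR k + 1))).
  { intro k. unfold ws. apply epsilon_spec. apply happ. apply Rlt_gt, RinvN_pos. }
  assert (hcauchy : forall k j, nsq (hsub (ws k) (ws j)) <= 2 * / (INR k + 1) + 2 * / (INR j + 1)).
  { intros k j. pose proof (hmin _ _ (rle_mid u S _ _ _ _ (hws k) (hws j))). lra. }
  destruct (complete_sq ws) as [c hc].
  { intros eps he. destruct (inv_small (eps / 4)) as [N HN]. lra. exists N. intros m0 n hm hn.
    pose proof (HN m0 hm). pose proof (HN n hn). specialize (hcauchy m0 n). lra. }
  exists c, rho. split; auto.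
  apply rle_lim. intros e he.
  set (eta := e / (3 * (rho + 1))).
  assert (heta : eta > 0) by (unfold eta; apply Rdiv_lt_0_compat; lra).
  assert (hie : / eta > 0) by (apply Rinv_0_lt_compat; lra).
  destruct (inv_small (e / (3 * (1 + eta)))) as [N1 H1]. apply Rdiv_lt_0_compat; lra.
  destruct (hc (e / (3 * (1 + / eta)))) as [N2 H2]. apply Rdiv_lt_0_compat; lra.
  set (k := max N1 N2). specialize (H1 k ltac:(lia)). specialize (H2 k ltac:(lia)).
  eapply rle_mono. apply (rle_young2 u S (ws k) c _ eta heta (hws k)).
  assert (a1 : (1 + eta) * (/ (INR k + 1)) <= (1 + eta) * (e / (3 * (1 + eta)))) by (apply Rmult_le_compat_l; lra).
  assert (a2 : (1 + / eta) * nsq (hsub (ws k) c) <= (1 + / eta) * (e / (3 * (1 + / eta)))) by (apply Rmult_le_compat_l; lra).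
  assert (a3 : (1 + eta) * (e / (3 * (1 + eta))) = e / 3) by (field; lra).
  assert (a4 : (1 + / eta) * (e / (3 * (1 + / eta))) = e / 3) by (field; lra).
  assert (a5 : eta * rho <= e / 3).
  { assert (eta * (rho + 1) = e / 3) by (unfold eta; field; lra). nra. }
  nra.
Qed.

Lemma rle_uniq u S c w rho : (forall w s, rle u S w s -> rho <= s) ->
  rle u S c rho -> rle u S w rho -> c = w.
Proof.
  intros hmin h1 h2. pose proof (hmin _ _ (rle_mid u S _ _ _ _ h1 h2)). apply nsq0_eq. lra.
Qed.

End Center.


Section Gen.
Context {X : HilbertSpace}.
Lemma proj_closer (C : X -> Prop) u b : is_convex C -> nonempty C -> is_closed C -> C b ->
  nsq (hsub b (proj C u)) <= nsq (hsub b u).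
Proof.
  intros h1 h2 h3 hb. destruct (proj_char C u h1 h2 h3) as [_ hv]. specialize (hv b hb).
  set (p := proj C u) in *.
  replace (hsub b u) with (hadd (hsub b p) (hsub p u)) by veq.
  iexp. iexpH hv.
  try rewrite (hinner_sym p b) in *; try rewrite (hinner_sym u b) in *; try rewrite (hinner_sym u p) in *.
  pose proof (nsq_nonneg (hsub p u)). iexpH H. try rewrite (hinner_sym u p) in H. lra.
Qed.

Lemma nsq_add (p q : X) : nsq (hadd p q) = nsq p + 2 * hinner p q + nsq q.
Proof. iexp. rewrite (hinner_sym q p). ring. Qed.

Lemma nsq_opp (p : X) : nsq (hscal (-1) p) = nsq p.
Proof. iexp. ring. Qed.
End Gen.

Section Main.
Context {X : HilbertSpace} (A B : X -> Prop)
  (hA_ne : nonempty A) (hA_aff : is_affine A) (hA_cl : is_closed A)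
  (hB_ne : nonempty B) (hB_conv : is_convex B) (hB_cl : is_closed B)
  (hg : mdiff B A (proj (closure (mdiff B A)) hzero)) (x : X).

Definition g := gv A B.
Definition xs (n : nat) : X := Nat.iter n (T A B) x.
Definition as_ (n : nat) : X := proj A (xs n).
Definition bs (n : nat) : X := proj B (refl A (xs n)).
Definition ds (n : nat) : X := hsub (xs n) (xs (S n)).
Definition EE (e : X) : Prop := A e /\ B (hadd e g).
Definition zs (e : X) (n : nat) : X := hadd e (hscal (INR n - 1) g).
Definition qs (e : X) (n : nat) : R := nsq (hsub (xs n) (zs e n)).
Definition Vn (n : nat) : R := nsq (hsub (hsub (xs n) (as_ n)) (hscal (INR n - 1) g)).
Definition dl (n : nat) : R := nsq (hadd (ds n) g).

Lemma as_bs n : as_ n = hadd (bs n) (ds n).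
Proof.
  unfold ds, as_, bs. change (xs (S n)) with (T A B (xs n)). unfold T, DR_op. veq.
Qed.

Lemma E0 : exists e, EE e.
Proof.
  destruct hg as [b0 [a0 [hb0 [ha0 Hg]]]]. exists a0. split; auto.
  unfold g, gv. rewrite Hg. replace (hadd a0 (hsub b0 a0)) with b0 by veq. auto.
Qed.

Lemma fejer e n : EE e -> qs e (S n) + dl n <= qs e n.
Proof.
  intros [he heg]. unfold qs, dl.
  pose proof (T_fne A B hA_ne hA_aff hA_cl hB_ne hB_conv hB_cl (xs n) (zs e n)) as H.
  assert (hz : T A B (zs e n) = zs e (S n)).
  { unfold zs. rewrite (T_z A B hA_ne hA_aff hA_cl hB_ne hB_conv hB_cl hg); auto.
    rewrite S_INR. f_equal. f_equal. ring. pose proof (pos_INR n). lra. }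
  rewrite hz in H. change (T A B (xs n)) with (xs (S n)) in H.
  replace (hsub (hsub (xs n) (xs (S n))) (hsub (zs e n) (zs e (S n)))) with (hadd (ds n) g) in H.
  exact H. unfold zs, ds. rewrite S_INR. veq.
Qed.

Lemma decomp e n : EE e -> qs e n = nsq (hsub (as_ n) e) + Vn n.
Proof.
  intros [he heg]. unfold qs, Vn, zs.
  replace (hsub (xs n) (hadd e (hscal (INR n - 1) g)))
    with (hadd (hsub (as_ n) e) (hsub (hsub (xs n) (as_ n)) (hscal (INR n - 1) g))) by veq.
  rewrite nsq_add.
  destruct (PA_char A hA_ne hA_aff hA_cl (xs n)) as [ha hv].
  specialize (hv e he). fold (as_ n) in ha, hv.
  pose proof (g_perp A B hA_aff hB_conv hg (as_ n) e ha he) as hp.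
  fold g in hp.
  assert (hinner (hsub (as_ n) e) (hsub (hsub (xs n) (as_ n)) (hscal (INR n - 1) g)) = 0).
  { unfold hsub at 2. rewrite hinner_add_r, hinner_opp_r, hinner_scal_r, (hinner_sym _ g), hp.
    rewrite hinner_sym. replace (hsub (as_ n) e) with (hscal (-1) (hsub e (as_ n))) by veq.
    rewrite hinner_scal_r, hv. ring. }
  lra.
Qed.

Lemma q_conv e : EE e -> exists l, Un_cv (qs e) l.
Proof.
  intro he. destruct (decreasing_cv (qs e)) as [l hl].
  - intro n. pose proof (fejer e n he). pose proof (nsq_nonneg (hadd (ds n) g)). unfold dl in *. lra.
  - exists 0. intros r [i ->]. unfold opp_seq. pose proof (nsq_nonneg (hsub (xs i) (zs e i))). unfold qs. lra.
  - exists l; auto.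
Qed.

Lemma q_dec e n : EE e -> qs e n <= qs e 0.
Proof.
  intro he. induction n. lra. pose proof (fejer e n he). pose proof (nsq_nonneg (hadd (ds n) g)).
  unfold dl in *. lra.
Qed.

Lemma dl_to0 : forall eps, eps > 0 -> exists N, forall n, (n >= N)%nat -> dl n <= eps.
Proof.
  intros eps he. destruct E0 as [e0 he0]. destruct (q_conv e0 he0) as [l hl].
  destruct (hl (eps/2) ltac:(lra)) as [N HN]. exists N. intros n hn.
  pose proof (HN n hn). pose proof (HN (S n) ltac:(lia)). pose proof (fejer e0 n he0).
  unfold Rdist in *. unfold Rabs in *.
  destruct (Rcase_abs (qs e0 n - l)); destruct (Rcase_abs (qs e0 (S n) - l)); lra.
Qed.

Lemma dl_nonneg n : 0 <= dl n.
Proof. apply nsq_nonneg. Qed.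

Lemma rle_exists_as S w : exists s, rle as_ S w s.
Proof.
  destruct E0 as [e0 he0].
  exists (2 * qs e0 0 + 2 * nsq (hsub e0 w)). intros eps he. exists O. intros n _ _.
  replace (hsub (as_ n) w) with (hadd (hsub (as_ n) e0) (hsub e0 w)) by veq.
  eapply Rle_trans. apply young with (eta := 1); lra.
  pose proof (decomp e0 n he0). pose proof (q_dec e0 n he0).
  assert (0 <= Vn n) by apply nsq_nonneg. replace (/ 1) with 1 by field. lra.
Qed.

Lemma center_in_E S c rho : infinite S -> rle as_ S c rho ->
  (forall w s, rle as_ S w s -> rho <= s) -> EE c.
Proof.
  intros hi hc hmin.
  assert (hAc : A c).
  { assert (h : rle as_ S (proj A c) rho).
    { intros eps he. destruct (hc eps he) as [N HN]. exists N. intros n h1 h2.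
      eapply Rle_trans; [|apply (HN n h1 h2)].
      apply proj_closer; [apply (A_conv A hA_aff)|auto|auto|].
      apply (PA_char A hA_ne hA_aff hA_cl). }
    rewrite (rle_uniq as_ S c (proj A c) rho hmin hc h).
    apply (PA_char A hA_ne hA_aff hA_cl). }
  split; auto.
  assert (h1 : rle bs S (hadd c g) rho).
  { apply (rle_young as_ bs S c (hadd c g) rho dl hi hc dl_nonneg dl_to0).
    intros n eta heta _.
    replace (hsub (bs n) (hadd c g)) with (hadd (hsub (as_ n) c) (hscal (-1) (hadd (ds n) g)))
      by (rewrite as_bs; veq).
    eapply Rle_trans. apply young with (eta := eta); auto. rewrite nsq_opp. unfold dl. lra. }
  set (p := proj B (hadd c g)).
  assert (h2 : rle bs S p rho).
  { intros eps he. destruct (h1 eps he) as [N HN]. exists N. intros n n1 n2.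
    eapply Rle_trans; [|apply (HN n n1 n2)].
    apply proj_closer; auto. apply (PB_char B hB_ne hB_conv hB_cl). }
  assert (h3 : rle as_ S (hsub p g) rho).
  { apply (rle_young bs as_ S p (hsub p g) rho dl hi h2 dl_nonneg dl_to0).
    intros n eta heta _.
    replace (hsub (as_ n) (hsub p g)) with (hadd (hsub (bs n) p) (hadd (ds n) g))
      by (rewrite as_bs; veq).
    eapply Rle_trans. apply young with (eta := eta); auto. unfold dl. lra. }
  rewrite (rle_uniq as_ S c (hsub p g) rho hmin hc h3).
  replace (hadd (hsub p g) g) with p by veq. apply (PB_char B hB_ne hB_conv hB_cl).
Qed.

Lemma inner_sub_l (a c y : X) : hinner (hsub a c) y = hinner a y - hinner c y.
Proof. iexp. ring. Qed.

Lemma no_bad c rho y eps S : rle as_ (fun _ => True) c rho ->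
  (forall w s, rle as_ (fun _ => True) w s -> rho <= s) -> EE c -> eps > 0 -> infinite S ->
  (forall n, S n -> eps <= hinner (hsub (as_ n) c) y) -> False.
Proof.
  intros hc hmin hE he hi hS.
  destruct (center_exists as_ S hi) as [c' [rho' [hc' hmin']]].
  { exists c. apply rle_exists_as. }
  pose proof (center_in_E S c' rho' hi hc' hmin') as hE'.
  destruct (q_conv c hE) as [lc hlc]. destruct (q_conv c' hE') as [lc' hlc'].
  set (Dn := fun n => qs c n - qs c' n). set (D := lc - lc').
  assert (hD : forall e, e > 0 -> exists N, forall n, (n >= N)%nat -> Rabs (Dn n - D) <= e).
  { intros e h. destruct (hlc (e/2) ltac:(lra)) as [N1 H1]. destruct (hlc' (e/2) ltac:(lra)) as [N2 H2].
    exists (max N1 N2). intros n hn. specialize (H1 n ltac:(lia)). specialize (H2 n ltac:(lia)).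
    unfold Rdist in *. unfold Dn, D. unfold Rabs in *.
    destruct (Rcase_abs (qs c n - lc)); destruct (Rcase_abs (qs c' n - lc'));
    destruct (Rcase_abs (qs c n - qs c' n - (lc - lc'))); lra. }
  assert (hD' : forall e, e > 0 -> exists N, forall n, (n >= N)%nat -> Rabs ((fun n => - Dn n) n - - D) <= e).
  { intros e h. destruct (hD e h) as [N HN]. exists N. intros n hn. specialize (HN n hn).
    replace (- Dn n - - D) with (- (Dn n - D)) by ring. rewrite Rabs_Ropp. exact HN. }
  assert (hDn : forall n, nsq (hsub (as_ n) c) = nsq (hsub (as_ n) c') + Dn n).
  { intro n. unfold Dn. rewrite (decomp c n hE), (decomp c' n hE'). ring. }
  assert (hDn' : forall n, nsq (hsub (as_ n) c') = nsq (hsub (as_ n) c) + (fun n => - Dn n) n).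
  { intro n. rewrite hDn. ring. }
  pose proof (hmin _ _ (rle_shift as_ (fun _ => True) c c' rho (- D) (fun n => - Dn n) hc hD' hDn')) as h1.
  pose proof (rle_shift as_ S c' c rho' D Dn hc' hD hDn) as h2.
  assert (h3 : rle as_ S c rho') by (eapply rle_mono; [exact h2| lra]).
  set (Y := nsq y).
  assert (hY : Y > 0).
  { destruct (Rle_lt_dec Y 0) as [hy|hy]; [|lra]. exfalso.
    assert (y = hzero). { apply nsq_eq0. pose proof (nsq_nonneg y) as hy0. unfold Y in *. lra. }
    destruct (hi O) as [n [_ hn]]. specialize (hS n hn). rewrite H, hinner_0_r in hS. lra. }
  set (t := eps / Y).
  assert (h4 : rle as_ S (hadd c (hscal t y)) (rho' - eps * eps / Y)).
  { intros e h. destruct (h3 e h) as [N HN]. exists N. intros n hn hs. specialize (HN n hn hs).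
    specialize (hS n hs).
    replace (hsub (as_ n) (hadd c (hscal t y))) with (hsub (hsub (as_ n) c) (hscal t y)) by veq.
    rewrite nsq_sub_scal. fold Y.
    assert (ht : t * t * Y = eps * eps / Y) by (unfold t; field; lra).
    assert (ht2 : 2 * t * eps = 2 * (eps * eps / Y)) by (unfold t; field; lra).
    assert (ht0 : 0 <= t) by (unfold t; apply Rlt_le, Rdiv_lt_0_compat; lra).
    assert (2 * t * eps <= 2 * t * hinner (hsub (as_ n) c) y) by (apply Rmult_le_compat_l; lra).
    lra. }
  pose proof (hmin' _ _ h4).
  assert (0 < eps * eps / Y) by (apply Rdiv_lt_0_compat; nra).
  lra.
Qed.

Lemma main_sec : exists z, EE z /\ weakly_converges as_ z.
Proof.
  assert (hinf : infinite (fun _ : nat => True)) by (intro N; exists N; split; auto).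
  destruct (center_exists as_ (fun _ => True) hinf) as [c [rho [hc hmin]]].
  { exists x. apply rle_exists_as. }
  pose proof (center_in_E _ c rho hinf hc hmin) as hE.
  exists c. split; auto. intro y. apply NNPP. intro hnc.
  unfold Un_cv in hnc. apply not_all_ex_not in hnc. destruct hnc as [eps hnc].
  apply imply_to_and in hnc. destruct hnc as [he hnc].
  assert (hN : forall N, exists n, (n >= N)%nat /\ eps <= Rabs (hinner (as_ n) y - hinner c y)).
  { intro N. apply NNPP. intro hn. apply hnc. exists N. intros n hn'. unfold Rdist.
    apply Rnot_le_lt. intro hl. apply hn. exists n. auto. }
  set (S1 := fun n => eps <= hinner (hsub (as_ n) c) y).
  destruct (classic (infinite S1)) as [hi|hi].
  - apply (no_bad c rho y eps S1 hc hmin hE he hi). auto.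
  - assert (hN1 : exists N1, forall n, (n >= N1)%nat -> ~ S1 n).
    { apply NNPP. intro h. apply hi. intro N. apply NNPP. intro h2. apply h. exists N.
      intros n hn hs. apply h2. exists n. auto. }
    destruct hN1 as [N1 HN1].
    set (S2 := fun n => eps <= hinner (hsub (as_ n) c) (hscal (-1) y)).
    apply (no_bad c rho (hscal (-1) y) eps S2 hc hmin hE he); [|auto].
    intro N. destruct (hN (max N N1)) as [n [hn hr]]. exists n. split. lia.
    specialize (HN1 n ltac:(lia)). unfold S1, S2 in *. rewrite hinner_scal_r.
    rewrite inner_sub_l in *. unfold Rabs in hr. destruct (Rcase_abs (hinner (as_ n) y - hinner c y)); lra.
Qed.

End Main.

Theorem theorem2p3 (X : HilbertSpace) (A B : X -> Prop)
  (hA_ne : nonempty A) (hA_aff : is_affine A) (hA_cl : is_closed A)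
  (hB_ne : nonempty B) (hB_conv : is_convex B) (hB_cl : is_closed B)
  (hg : mdiff B A (proj (closure (mdiff B A)) hzero))
  (x : X) :
  let g := proj (closure (mdiff B A)) hzero in
  let E := fun z => A z /\ B (hadd z g) in
  exists z, E z /\
    weakly_converges (fun n => proj A (Nat.iter n (DR_op A B) x)) z.
Proof.
  intros g0 E. exact (main_sec A B hA_ne hA_aff hA_cl hB_ne hB_conv hB_cl hg x).
Qed.
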